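(* Let $L\ge n\ge 1$ and let $q(x)\in\mathrm{GF}(2)[x]/(x^L+1)$ be nonzero, represented as a polynomial of degree at most $n-1$. Let $S$ be a set of $n-1$ bit positions consecutive modulo $L$. If $w$ is chosen uniformly at random in $\mathrm{GF}(2)[x]/(x^L+1)$, then for every $y$, the probability that $q(x)w\bmod(x^L+1)$ and $y$ agree in every bit position outside $S$ equals $2^{-(L-n+1)}$.
   Context: Elements of $\mathrm{GF}(2)[x]/(x^L+1)$ are identified with polynomials $\sum_{i=0}^{L-1}c_ix^i$ over $\mathrm{GF}(2)$; bit position $i$ refers to the coefficient of $x^i$. A set of $m$ positions is consecutive modulo $L$ if it equals $\{k\bmod L,\dots,(k+m-1)\bmod L\}$ for some integer $k$. *)

(* Defs.v *)
From HB Require Import structures.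
From mathcomp Require Import all_boot all_order all_algebra.
Set Implicit Arguments. Unset Strict Implicit. Unset Printing Implicit Defensive.
Import GRing.Theory.
Local Open Scope ring_scope.

(* Elements of GF(2)[x]/(x^L+1): vectors of L bits c_0..c_{L-1},
   c_i being the coefficient of x^i. *)
Definition cyc_elt (L : nat) := {ffun 'I_L -> 'F_2}.

Definition to_poly (L : nat) (w : cyc_elt L) : {poly 'F_2} :=
  \poly_(i < L) (if insub i is Some j then w j else 0).

Definition mulmod_bit (L : nat) (q : {poly 'F_2}) (w : cyc_elt L) (i : 'I_L) : 'F_2 :=
  ((q * to_poly w) %% ('X^L + 1))`_i.

Definition consecutive_mod (L m : nat) (S : {set 'I_L}) : Prop :=
  exists k : nat, S = [set i : 'I_L | [exists j : 'I_m, val i == ((k + j) %% L)%N]].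
Arguments consecutive_mod : clear implicits.

(* Main.v *)
Require Import Defs.
From HB Require Import structures.
From mathcomp Require Import all_boot all_order all_algebra.
Import GRing.Theory.
Set Warnings "-notation-overridden,-ambiguous-paths".
Local Open Scope ring_scope.

Lemma F2_char : 2%N \in [pchar 'F_2].
Proof. exact: pchar_Fp. Qed.

Lemma F2_opp (x : 'F_2) : - x = x.
Proof. exact: (oppr_pchar2 F2_char). Qed.

Lemma F2_opp_poly (p : {poly 'F_2}) : - p = p.
Proof. by apply/polyP => i; rewrite coefN F2_opp. Qed.

Lemma modpB_ (d p r : {poly 'F_2}) : (p - r) %% d = p %% d - r %% d.
Proof. by rewrite modpD modpN. Qed.

Lemma eqmod (d p r : {poly 'F_2}) : d %| p - r -> p %% d = r %% d.
Proof.
move=> H; apply/eqP; rewrite -subr_eq0 -modpB_; apply/eqP; exact: modp_eq0.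
Qed.

Definition MM (L : nat) : {poly 'F_2} := 'X^L + 1.

Lemma modXL L t (A : {poly 'F_2}) : ('X^(L * t) * A) %% MM L = A %% MM L.
Proof.
apply: eqmod.
have -> : 'X^(L * t) * A - A = ('X^(L*t) - 1) * A by rewrite mulrBl mul1r.
apply: dvdp_mulr.
rewrite exprM -(expr1n _ t) subrXX; apply: dvdp_mulr.
by rewrite /MM F2_opp_poly.
Qed.

Lemma rotate L s (Q : {poly 'F_2}) j : (0 < L)%N -> (size Q <= L)%N -> (j < L)%N ->
  (('X^s * Q) %% MM L)`_((s + j) %% L) = Q`_j.
Proof.
move=> L0 sQ jL.
rewrite {1}(divn_eq s L) exprD -mulrA mulnC modXL.
rewrite -modnDml.
set r := (s %% L)%N.
have rL : (r < L)%N by rewrite ltn_pmod.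
set A := 'X^r * Q.
have eA : A = drop_poly L A * MM L + (take_poly L A - drop_poly L A).
  set T := take_poly L A; set D := drop_poly L A.
  rewrite -{1}(poly_take_drop L A) -/T -/D /MM mulrDr mulr1.
  by rewrite -addrA [D + _]addrC subrK addrC.
rewrite eA modp_addl_mul_small; last first.
  rewrite /MM size_XnaddC // ltnS; apply: leq_trans (size_polyD _ _) _.
  rewrite geq_max size_take_poly size_polyN size_drop_poly.
  rewrite leq_subLR; apply: leq_trans (size_polyMleq _ _) _.
  rewrite size_polyXn /=; exact: leq_add (ltnW rL) sQ.
rewrite coefB coef_take_poly coef_drop_poly /A !coefXnM.
case: (ltnP (r + j) L) => h.
  rewrite modn_small // h ltnNge leq_addr /= addKn.
  rewrite ltnNge (leq_trans (leq_addr j r) (leq_addr _ _)) /=.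
  rewrite [Q`_(_ - r)]nth_default ?subr0 //.
  by rewrite -addnA addKn (leq_trans sQ) // leq_addl.
have e : ((r + j) %% L = r + j - L)%N.
  rewrite -{1}(subnK h) modnDr modn_small //.
  by rewrite ltn_subLR // -addSn leq_add // ltnW.
have h2 : (r + j - L < r)%N.
  by rewrite ltn_subLR // [(L + r)%N]addnC ltn_add2l.
rewrite e h2 (leq_trans h2 (ltnW rL)) subnK // ltnNge leq_addr /= addKn.
by rewrite sub0r F2_opp.
Qed.

Lemma F2_nz (c : 'F_2) : c != 0 -> c = 1.
Proof. by case: c => [[|[|//]]] //= ? _; apply/val_inj. Qed.

Lemma to_poly_coef L (w : cyc_elt L) (i : 'I_L) : (to_poly w)`_i = w i.
Proof.
rewrite coef_poly ltn_ord; case: insubP => [j _ /val_inj -> // | ].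
by rewrite ltn_ord.
Qed.

Lemma to_poly_surj L (P : {poly 'F_2}) : (size P <= L)%N ->
  to_poly ([ffun i : 'I_L => P`_i]) = P.
Proof.
move=> sP; apply/polyP => i; rewrite coef_poly; case: ltnP => h.
  by case: insubP => [j _ <-|]; [rewrite ffunE | rewrite h].
by rewrite nth_default // (leq_trans sP h).
Qed.

Lemma to_polyB L (a b : cyc_elt L) : to_poly (a - b) = to_poly a - to_poly b.
Proof.
apply/polyP => i; rewrite coefB !coef_poly; case: (i < L)%N; last by rewrite subr0.
by case: insubP => [j _ _|_]; rewrite ?ffunE ?subr0.
Qed.

Lemma surj_core L n (q : {poly 'F_2}) s (zf : nat -> 'F_2) :
  (1 <= n)%N -> (n <= L)%N -> q != 0 -> (size q <= n)%N ->
  exists w : cyc_elt L, forall j, (j < L - n.-1)%N ->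
    ((q * to_poly w) %% MM L)`_((s + j) %% L) = zf j.
Proof.
move=> n1 nL q0 sq.
have L0 : (0 < L)%N by apply: leq_trans nL.
set m := (L - n.-1)%N.
have mL : (m <= L)%N by apply: leq_subr.
have exq : exists i, q`_i != 0.
  by exists (size q).-1; rewrite -lead_coefE lead_coef_eq0.
case: (ex_minnP exq) => a qa amin.
set q' := drop_poly a q.
have eq : q = q' * 'X^a.
  rewrite -{1}(poly_take_drop a q); have -> : take_poly a q = 0; last by rewrite add0r.
  apply/polyP => i; rewrite coef_take_poly coef0; case: ifP => // ia.
  apply/eqP; apply: contraT => nz; have := amin _ nz; by rewrite leqNgt ia.
have q'0 : q'`_0 != 0 by rewrite coef_drop_poly add0n.
have cop : coprimep q' ('X^m).
  apply: coprimep_expr; have := coprimep_XsubC q' 0.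
  by rewrite polyC0 subr0 => ->; rewrite /root horner_coef0.
case/Bezout_coprimepP: cop => [[u v]] /= /eqpf_eq [c c0 huv].
rewrite (F2_nz _ c0) scale1r in huv.
set P := \poly_(j < m) zf j.
set w0 := (u * P) %% 'X^m.
set Qo := q' * w0.
have hQ : forall j, (j < m)%N -> Qo`_j = zf j.
  have d : 'X^m %| Qo - P.
    apply/modp_eq0P; rewrite modpB_ /Qo modp_mul mulrA [q' * u]mulrC.
    have -> : u * q' = 1 - v * 'X^m by rewrite -huv addrK.
    by rewrite mulrBl mul1r modpB_ mulrAC modp_mull subr0 subrr.
  case/dvdpP: d => R eR j jm; have := congr1 (fun p : {poly 'F_2} => p`_j) eR.
  rewrite /= coefB coefMXn jm => /eqP; rewrite subr_eq0 => /eqP ->.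
  by rewrite coef_poly jm.
have sQo : (size Qo <= L)%N.
  apply: leq_trans (size_polyMleq _ _) _.
  have s1 : (size q' <= n)%N by rewrite size_drop_poly (leq_trans (leq_subr _ _)).
  have s2 : (size w0 <= m)%N.
    by rewrite -ltnS -(size_polyXn 'F_2 m) ltn_modp -size_poly_eq0 size_polyXn.
  apply: leq_trans (_ : (n + m).-1 <= L)%N.
    by rewrite -!subn1 leq_sub2r // leq_add.
  rewrite /m -(prednK n1) addSn /= subnKC //.
  by rewrite -ltnS prednK // (leq_trans nL).
set t := (s + L.-1 * a)%N.
set W := ('X^t * w0) %% MM L.
have sW : (size W <= L)%N.
  rewrite -ltnS; have <- : size (MM L) = L.+1 by rewrite /MM -polyC1 size_XnaddC.
  by rewrite ltn_modp -size_poly_eq0 /MM -polyC1 size_XnaddC.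
exists [ffun i : 'I_L => W`_i]; rewrite to_poly_surj // => j jm.
rewrite /W modp_mul.
have -> : q * ('X^t * w0) = 'X^(L * a) * ('X^s * Qo).
  rewrite eq -mulrA (mulrA 'X^a) -exprD mulrCA (mulrA 'X^(L * a)) -exprD.
  congr (_ * _); congr ('X^_).
  by rewrite -{1}(prednK L0) mulSn /t -addnA [(s + _)%N]addnC.
rewrite modXL rotate //; first exact: hQ.
exact: leq_trans jm mL.
Qed.

Theorem mainTheorem7 (L n : nat) (q : {poly 'F_2}) (S : {set 'I_L})
  (y : cyc_elt L) :
  (1 <= n)%N -> (n <= L)%N -> q != 0 -> (size q <= n)%N ->
  consecutive_mod L n.-1 S ->
  (#|[set w : cyc_elt L | [forall i : 'I_L, (i \notin S) ==> (mulmod_bit q w i == y i)]]|%:R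
     / (#|[set: cyc_elt L]|)%:R : rat)
  = 2%:R ^- (L - n.-1).
Proof.
move=> n1 nL q0 sq [k eS].
have L0 : (0 < L)%N by apply: leq_trans nL.
have nL' : (n.-1 < L)%N by rewrite (leq_trans _ nL) // prednK.
pose g (w : cyc_elt L) : cyc_elt L :=
  [ffun i => if i \in S then 0 else mulmod_bit q w i].
pose y' : cyc_elt L := [ffun i => if i \in S then 0 else y i].
have gB : forall a b, g (a - b) = g a - g b.
  move=> a b; apply/ffunP => i; rewrite !ffunE; case: (i \in S); first by rewrite subr0.
  by rewrite /mulmod_bit to_polyB mulrBr modpB_ coefB.
have eA : [set w : cyc_elt L | [forall i : 'I_L, (i \notin S) ==> (mulmod_bit q w i == y i)]]
    = [set w | g w == y'].
  apply/setP => w; rewrite !inE; apply/forallP/eqP => [H | H i].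
    apply/ffunP => i; rewrite !ffunE; case: ifP => // iS; apply/eqP.
    by have := H i; rewrite iS.
  apply/implyP => iS; have := congr1 (fun f : cyc_elt L => f i) H.
  by rewrite /= !ffunE (negbTE iS) => ->.
have surj : forall z : cyc_elt L, exists w, g w = [ffun i => if i \in S then 0 else z i].
  move=> z; set s := (k + n.-1)%N.
  have [w hw] := surj_core L n q s (fun j => z (Ordinal (ltn_pmod (s + j) L0))) n1 nL q0 sq.
  exists w; apply/ffunP => i; rewrite !ffunE; case: ifP => // iS.
  have [j jm ei] : exists2 j, (j < L - n.-1)%N & val i = ((s + j) %% L)%N.
    set j' := ((val i + (L - k %% L)) %% L)%N.
    have ej' : ((k + j') %% L = val i)%N.
      rewrite /j' modnDmr addnCA {1}(divn_eq k L) -addnA subnKC ?(ltnW (ltn_pmod _ L0)) //.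
      by rewrite -mulSnr [(i + _)%N]addnC modnMDl modn_small ?ltn_ord.
    have jL : (j' < L)%N by apply: ltn_pmod.
    have nj : (n.-1 <= j')%N.
      rewrite leqNgt; apply/negP => h.
      rewrite eS inE in iS; move/negbT: iS => /existsPn /(_ (Ordinal h)).
      by rewrite /= ej' eqxx.
    exists (j' - n.-1)%N; first exact: ltn_sub2r.
    by rewrite /s -addnA subnKC.
  have := hw j jm; rewrite /MM => e; rewrite /mulmod_bit ei e.
  by congr (z _); apply/val_inj; rewrite /= ei.
have fib : forall z w0, g w0 = z -> #|[set w | g w == z]| = #|[set w | g w == 0]|.
  move=> z w0 e; rewrite -(card_preimset [set w | g w == 0] (@addIr _ (- w0))).
  by apply: eq_card => w; rewrite !inE gB e subr_eq0.
pose Z := [set z : cyc_elt L | [forall i, (i \in S) ==> (z i == 0)]].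
have count : #|[set: cyc_elt L]| = (#|Z| * #|[set w | g w == 0%R]|)%N.
  have -> : #|[set: cyc_elt L]| = (\sum_(w : cyc_elt L) 1)%N by rewrite cardsT -sum1_card.
  rewrite (partition_big g (mem Z)); last first.
    by move=> w _; rewrite inE inE; apply/forallP => i; apply/implyP => iS; rewrite ffunE iS.
  transitivity (\sum_(z | mem Z z) #|[set w | g w == 0%R]|)%N.
    apply: eq_bigr => z zZ.
    have [w hw] := surj z.
    have hw' : g w = z.
      rewrite hw; apply/ffunP => i; rewrite ffunE; case: ifP => // iS.
      by move: zZ; rewrite inE inE => /forallP /(_ i); rewrite iS => /eqP ->.
    rewrite -(fib z w hw') -sum1_card; apply: eq_bigl => w'; by rewrite inE.
  by rewrite sum_nat_const.
have cS : #|S| = n.-1.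
  have -> : S = [set (Ordinal (ltn_pmod (k + val j) L0)) | j in [set: 'I_n.-1]].
    rewrite eS; apply/setP => i; rewrite inE.
    apply/existsP/imsetP => [[j /eqP e] | [j _ ->]].
      by exists j => //; apply/val_inj.
    by exists j.
  rewrite card_imset ?cardsT ?card_ord //.
  move=> j1 j2 /(congr1 val) /= /eqP; rewrite eqn_modDl !modn_small.
  - by move/eqP/val_inj.
  - exact: leq_trans (ltn_ord _) (ltnW nL').
  - exact: leq_trans (ltn_ord _) (ltnW nL').
have cZ : #|Z| = (2 ^ (L - n.-1))%N.
  have -> : #|Z| = #|pffun_on (0 : 'F_2) (~: S) [set: 'F_2]|.
    apply: eq_card => z; rewrite inE; apply/forallP/pffun_onP.
      move=> H; split; last by move=> x _; rewrite inE.
      apply/subsetP => i; rewrite !inE => nz; apply: contra nz => iS.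
      by have := H i; rewrite iS.
    move=> [sub _] i; apply/implyP => iS; apply: contraT => nz.
    by have := subsetP sub i; rewrite !inE nz iS => /(_ isT).
  rewrite card_pffun_on cardsT card_Fp // -cS.
  by rewrite -[X in (X - _)%N](card_ord L) -(cardsC S) addKn.
have [w0 hw0] := surj y.
rewrite eA (fib y' w0 hw0) count natrM cZ natrX.
have F0 : (#|[set w | g w == 0]|%:R : rat) != 0.
  rewrite Num.Theory.pnatr_eq0 -lt0n; apply/card_gt0P; exists 0; rewrite inE.
  by have := gB 0 0; rewrite [in X in g X = _]subrr => ->; rewrite subrr.
by rewrite [X in _ / X]mulrC invfM mulVKf.
Qed.
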